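(* Let $G$ be a graph, let $s\in\mathbb{N}_{\geq 1}\cup\{\infty\}$ and let $k\in\mathbb{N}$. The following three statements are equivalent. (1) $\mathbf{cc}_s(G)\leq k$, i.e., there is a cop strategy $f$ on $G$ of cost at most $k$ such that for every robber strategy $R$ on $G$ the pair $(f,R)$ is cop-winning. (2) $G$ has no nonempty $(k+1,s)$-edge-hide-out. (3) $\delta^{s}_{\rm e}(G)\leq k$.
   Context: All graphs are finite, undirected, loopless, and may have parallel edges; $E(G)$ is the multiset of edges. For $s\in\mathbb{N}_{\geq1}\cup\{\infty\}$, an $s$-path is a path with at most $s$ edges (any path if $s=\infty$); a path of length $0$ from a vertex to itself is allowed. For $x\in V(G)$ and $S\subseteq V(G)\setminus\{x\}$, a set $A\subseteq E(G)$ is an $(s,x,S)$-edge-separator if every $s$-path of $G$ from $x$ to a vertex of $S$ contains an edge of $A$; $\mathbf{supp}_{G,s}(x,S)$ is the minimum size of such a separator (it is $0$ if $S=\emptyset$). For a layout (linear ordering) $L=\langle v_1,\dots,v_r\rangle$ of $V(G)$, the $s$-edge-support of $v_i$ is $\mathbf{supp}_{G,s}(v_i,\{v_1,\dots,v_{i-1}\})$; the $s$-edge-degeneracy of $L$ is the maximum $s$-edge-support of its vertices, and $\delta^{s}_{\rm e}(G)$ is the minimum of this over all layouts of $V(G)$. A $(k,s)$-edge-hide-out is a set $R\subseteq V(G)$ such that $\mathbf{supp}_{G,s}(x,R\setminus\{x\})\geq k$ for every $x\in R$. Search game: a cop strategy is a function $f:V(G)\to 2^{E(G)}$, with cost $\max_{v}|f(v)|$.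 A robber strategy is a pair $R=(v_{\rm start},g)$ with $v_{\rm start}\in V(G)$ and $g:2^{E(G)}\times V(G)\to V(G)$ such that for all $F,v$ there is an $s$-path from $v$ to $g(F,v)$ in $G\setminus F$ (so $g(F,v)=v$ is always allowed). The game scenario of $(f,R)$ is the sequence $v_0,F_1,v_1,F_2,v_2,\dots$ with $v_0=v_{\rm start}$, $F_i=f(v_{i-1})$, $v_i=g(F_i,v_{i-1})$; $(f,R)$ is cop-winning if $v_i=v_{i-1}$ for some $i\geq1$. $\mathbf{cc}_s(G)$ is the minimum $k$ such that some cop strategy of cost at most $k$ is cop-winning against every robber strategy. *)

(* Defs.v *)
From mathcomp Require Import all_boot all_order.
From mathcomp Require Import boolp.
Set Implicit Arguments. Unset Strict Implicit. Unset Printing Implicit Defensive.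

(* A finite loopless multigraph is given by a finite vertex type V, a finite
   type E of edge names (so parallel edges are distinct elements of E), and
   an endpoint map [ends : E -> V * V] with distinct endpoints. *)

(* s in N_{>=1} \cup {oo}: [Some n] is n, [None] is infinity. *)
Definition extn := option nat.

Section Graph.
Variables (V E : finType) (ends : E -> V * V).

Definition joins (e : E) (u v : V) : bool :=
  (ends e == (u, v)) || (ends e == (v, u)).

(* [walk_in F x p y]: p = [:: (e1,v1); ...; (el,vl)] is a walk x=v0,e1,v1,...,el,vl=y
   in G \ F (all edges outside F). *)
Fixpoint walk_in (F : {set E}) (x : V) (p : seq (E * V)) (y : V) : bool :=
  match p with
  | [::] => x == y
  | (e, v) :: p' => [&& e \notin F, joins e x v & walk_in F v p' y]
  end.

Definition path_in (F : {set E}) (x : V) (p : seq (E * V)) (y : V) : bool :=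
  walk_in F x p y && uniq (x :: map snd p).

Definition len_le (s : extn) (p : seq (E * V)) : bool :=
  if s is Some n then size p <= n else true.

Definition spath_in (s : extn) (F : {set E}) x p y : bool :=
  path_in F x p y && len_le s p.

Definition edge_sep (s : extn) (x : V) (S : {set V}) (A : {set E}) : Prop :=
  forall (p : seq (E * V)) (y : V), y \in S -> spath_in s set0 x p y ->
    has (fun ev => ev.1 \in A) p.

(* supp_{G,s}(x,S): minimum size of an (s,x,S)-edge-separator
   (E itself is always a separator when x \notin S). *)
Definition supp (s : extn) (x : V) (S : {set V}) : nat :=
  \big[minn/#|E|]_(A : {set E} | `[< edge_sep s x S A >]) #|A|.

(* layouts: bijections 'I_#|V| -> V, L i = v_{i+1} *)
Definition layout := {ffun 'I_#|V| -> V}.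

Definition layout_degeneracy (s : extn) (L : layout) : nat :=
  \max_(i < #|V|) supp s (L i) [set L j | j in 'I_#|V| & (j < i)%N].

Definition edge_degeneracy (s : extn) : nat :=
  \big[minn/#|E|]_(L : layout | injectiveb L) layout_degeneracy s L.

Definition edge_hideout (k : nat) (s : extn) (R : {set V}) : Prop :=
  forall x, x \in R -> k <= supp s x (R :\ x).

Definition cop_strategy := V -> {set E}.
Definition cost (f : cop_strategy) : nat := \max_(v : V) #|f v|.

Definition robber_valid (s : extn) (g : {set E} -> V -> V) : Prop :=
  forall F v, exists p, spath_in s F v p (g F v).

Fixpoint scenario (f : cop_strategy) (vstart : V) (g : {set E} -> V -> V)
  (i : nat) : V :=
  match i with
  | 0 => vstart
  | i'.+1 => let v := scenario f vstart g i' in g (f v) v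
  end.

Definition cop_winning (f : cop_strategy) (vstart : V) (g : {set E} -> V -> V) :=
  exists i, scenario f vstart g i.+1 = scenario f vstart g i.

End Graph.

(* Main.v *)
Require Import Defs.
From mathcomp Require Import all_boot all_order.
From mathcomp Require Import boolp.

Set Implicit Arguments. Unset Strict Implicit. Unset Printing Implicit Defensive.

Lemma bigmin_le (I : finType) (P : pred I) (F : I -> nat) d i :
  P i -> \big[minn/d]_(j | P j) F j <= F i.
Proof.
move=> Pi; have : i \in index_enum I by rewrite mem_index_enum.
elim: (index_enum I) => [//|j r IH]; rewrite inE big_cons => /orP[/eqP <-|ir].
  by rewrite Pi geq_minl.
by case: ifP => _; [rewrite geq_min IH ?orbT | exact: IH].
Qed.

Section Helpers.
Variables (V E : finType) (ends : E -> V * V).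

Lemma walk_noF (F : {set E}) x p y : walk_in ends F x p y -> ~~ has (fun ev => ev.1 \in F) p.
Proof.
elim: p x => [//|[e v] p IH] x /= /and3P[eF _ w]; rewrite negb_or eF /=; exact: IH w.
Qed.

Lemma walk_set0 (F : {set E}) x p y : walk_in ends F x p y -> walk_in ends set0 x p y.
Proof.
elim: p x => [//|[e v] p IH] x /= /and3P[_ j w]; rewrite inE j /=; exact: IH w.
Qed.

Lemma walk_F (F : {set E}) x p y : walk_in ends set0 x p y -> ~~ has (fun ev => ev.1 \in F) p ->
  walk_in ends F x p y.
Proof.
elim: p x => [//|[e v] p IH] x /= /and3P[_ j w]; rewrite negb_or => /andP[eF h].
by rewrite eF j /= IH.
Qed.

Lemma spath_set0 s (F : {set E}) x p y : spath_in ends s F x p y -> spath_in ends s set0 x p y.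
Proof. by rewrite /spath_in /path_in => /andP[/andP[w u] l]; rewrite (walk_set0 w) u l. Qed.

Lemma spath_F s (F : {set E}) x p y : spath_in ends s set0 x p y -> ~~ has (fun ev => ev.1 \in F) p ->
  spath_in ends s F x p y.
Proof. by rewrite /spath_in /path_in => /andP[/andP[w u] l] h; rewrite (walk_F w h) u l. Qed.

Lemma spath_nil s v : spath_in ends s set0 v [::] v.
Proof. by rewrite /spath_in /path_in /= eqxx; case: s. Qed.

Lemma supp_le s x (S : {set V}) (A : {set E}) : edge_sep ends s x S A -> supp ends s x S <= #|A|.
Proof.
move=> h; rewrite /supp; apply: (bigmin_le (P := fun A => `[< edge_sep ends s x S A >])).
by apply/asboolP.
Qed.

Lemma setT_sep s x (S : {set V}) : x \notin S -> edge_sep ends s x S setT.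
Proof.
move=> xS [|[e v] p] y yS /=.
  by rewrite /spath_in /path_in /= => /andP[/andP[/eqP xy _] _]; rewrite xy yS in xS.
by rewrite inE.
Qed.

Lemma supp_sep s x (S : {set V}) : x \notin S -> exists A, edge_sep ends s x S A /\ #|A| = supp ends s x S.
Proof.
move=> xS; rewrite /supp.
apply: (big_ind (fun m => exists A, edge_sep ends s x S A /\ #|A| = m)).
- by exists setT; split; [exact: setT_sep | rewrite cardsT].
- move=> a b [A [HA <-]] [B [HB <-]]; rewrite /minn; case: ifP => _.
  + by exists A. + by exists B.
- by move=> A /asboolP HA; exists A.
Qed.

Lemma supp_leE s x (S : {set V}) : supp ends s x S <= #|E|.
Proof.
rewrite /supp; apply: (big_ind (fun m => m <= #|E|)) => //.
- by move=> a b ha _; rewrite geq_min ha.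
- by move=> A _; rewrite -cardsT subset_leq_card // subsetT.
Qed.

End Helpers.

Section Main.
Variables (V E : finType) (ends : E -> V * V).

Lemma deg_cops s k : edge_degeneracy ends s <= k ->
  exists f : cop_strategy V E, cost f <= k /\
    forall vstart g, robber_valid ends s g -> cop_winning f vstart g.
Proof.
move=> Hk.
have [L [Linj Ldeg]] : exists L : layout V, injectiveb L /\ layout_degeneracy ends s L <= k.
  suff [L [h1 h2]] : exists L : layout V, injectiveb L /\
      layout_degeneracy ends s L <= edge_degeneracy ends s.
    by exists L; rewrite h1 (leq_trans h2 Hk).
  rewrite /edge_degeneracy.
  apply: (big_ind (fun m => exists L : layout V, injectiveb L /\ layout_degeneracy ends s L <= m)).
  - exists [ffun i => @enum_val V (pred_of_simpl predT) i]; split.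
      by apply/injectiveP => i j; rewrite !ffunE; exact: enum_val_inj.
    by apply/bigmax_leqP => i _; exact: supp_leE.
  - move=> a b [L1 [h1 h2]] [L2 [h3 h4]]; rewrite /minn; case: ifP => _.
    + by exists L1. + by exists L2.
  - by move=> L h; exists L.
have Linj' := injectiveP _ Linj.
pose B v := [set y | [exists i, (L i == v) && (y \in [set L j | j in 'I_#|V| & (j < i)%N])]].
have Bi : forall i, B (L i) = [set L j | j in 'I_#|V| & (j < i)%N].
  move=> i; apply/setP => y; rewrite inE; apply/existsP/idP => [[i' /andP[/eqP/Linj' -> h]]//|h].
  by exists i; rewrite eqxx.
pose f (v : V) := odflt set0 [pick A : {set E} | `[< edge_sep ends s v (B v) A >] && (#|A| <= k)].
exists f; split.
  apply/bigmax_leqP => v _; rewrite /f; case: pickP => [A /andP[_ h] | _] //=.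
  by rewrite cards0.
have Lsurj : forall v, exists i, L i = v.
  move=> v; have := @inj_card_onto _ _ _ Linj'; rewrite card_ord leqnn => /(_ isT v).
  by case/codomP => i ->; exists i.
have step : forall v w p, spath_in ends s (f v) v p w -> w != v -> #|B v| < #|B w|.
  move=> v w p sp wv; have [i Li] := Lsurj v; have [j Lj] := Lsurj w; subst.
  have fsep : edge_sep ends s (L i) (B (L i)) (f (L i)).
    rewrite /f; case: pickP => [A /andP[/asboolP h _]//|H]; exfalso.
    have nin : L i \notin B (L i).
      rewrite Bi; apply/imsetP => -[j']; rewrite inE => /andP[_ lt] /Linj' eq.
      by rewrite eq ltnn in lt.
    have [A [hA cA]] := supp_sep ends s nin.
    have := H A; rewrite (asboolT hA) /= cA Bi.
    have := leq_bigmax (F := fun i => supp ends s (L i) [set L j | j in 'I_#|V| & (j < i)%N]) i.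
    by move=> /leq_trans /(_ Ldeg) ->.
  have wnB : L j \notin B (L i).
    apply/negP => wB; have := fsep p (L j) wB (spath_set0 sp).
    case/andP: sp => /andP[w _] _.
    by rewrite (negbTE (walk_noF w)).
  have ij : i < j.
    case: (ltngtP i j) => // h.
      by case/negP: wnB; rewrite Bi; apply/imsetP; exists j; rewrite ?inE ?h.
    have e : i = j by exact: val_inj.
    by rewrite e eqxx in wv.
  apply: proper_card; apply/properP; split.
    apply/subsetP => y; rewrite !Bi => /imsetP[j']; rewrite inE => /andP[_ lt] ->.
    by apply/imsetP; exists j'; rewrite // inE (ltn_trans lt ij).
  exists (L i); rewrite !Bi.
    by apply/imsetP; exists i; rewrite ?inE ?ij.
  apply/imsetP => -[j']; rewrite inE => /andP[_ lt] /Linj' eq.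
  by rewrite eq ltnn in lt.
move=> v0 g gv; rewrite /cop_winning.
case: (pselect (exists i, scenario f v0 g i.+1 = scenario f v0 g i)) => // H; exfalso.
have big : forall n, n <= #|B (scenario f v0 g n)|.
  elim=> [//|n IH] /=.
  have [p sp] := gv (f (scenario f v0 g n)) (scenario f v0 g n).
  apply: (leq_ltn_trans IH); apply: (step _ _ _ sp).
  by apply/eqP => e; apply: H; exists n.
have := big #|V|.+1; rewrite ltnNge => /negP; apply.
exact: max_card.
Qed.

Lemma cops_nohide s k :
  (exists f : cop_strategy V E, cost f <= k /\
    forall vstart g, robber_valid ends s g -> cop_winning f vstart g) ->
  ~ (exists R : {set V}, R != set0 /\ edge_hideout ends k.+1 s R).
Proof.
move=> [f [cf win]] [R [R0 hR]].
case/set0Pn: R0 => x0 x0R.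
pose P (F : {set E}) (v : V) (py : seq (E * V) * V) :=
  (v \in R) /\ (py.2 \in R :\ v) /\ spath_in ends s F v py.1 py.2.
pose g F v := match pselect (exists py, P F v py) with
  | left h => (proj1_sig (cid h)).2 | right _ => v end.
have gv : robber_valid ends s g.
  move=> F v; rewrite /g; case: pselect => [h|_].
    by exists (proj1_sig (cid h)).1; exact: (proj2 (proj2 (proj2_sig (cid h)))).
  by exists [::]; rewrite /spath_in /path_in /= eqxx; case: (s).
have key : forall v, v \in R -> g (f v) v \in R :\ v.
  move=> v vR; rewrite /g; case: pselect => [h|hn].
    exact: (proj1 (proj2 (proj2_sig (cid h)))).
  exfalso.
  have cF : #|f v| <= k.
    by apply: leq_trans cf; exact: (leq_bigmax (F := fun v => #|f v|) v).
  have ns : ~ edge_sep ends s v (R :\ v) (f v).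
    move=> sep; have h2 := supp_le sep; have h1 := hR v vR.
    by have := leq_trans h1 (leq_trans h2 cF); rewrite ltnn.
  apply: ns => p y yS sp; apply/negPn/negP => nh; apply: hn.
  by exists (p, y); split => //; split => //=; exact: spath_F.
have [i ei] := win x0 g gv.
have inR : forall n, scenario f x0 g n \in R.
  elim=> //= n IH; by have := key _ IH; rewrite in_setD1 => /andP[_ ->].
move: ei => /= ei.
by have := key _ (inR i); rewrite ei in_setD1 eqxx.
Qed.

Lemma seq_build s k (x0 : V) :
  (forall R : {set V}, R != set0 -> exists2 x, x \in R & supp ends s x (R :\ x) <= k) ->
  forall n (R : {set V}), #|R| = n -> exists t : seq V,
    [/\ uniq t, t =i R & forall i, i < size t ->
       supp ends s (nth x0 t i) [set y | y \in take i t] <= k].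
Proof.
move=> H; elim=> [|n IH] R cR.
  by exists [::]; split => // y; rewrite (cards0_eq cR) inE.
have R0 : R != set0 by rewrite -card_gt0 cR.
have [x xR sx] := H R R0.
have [t [ut mt st]] : exists t : seq V,
    [/\ uniq t, t =i R :\ x & forall i, i < size t ->
       supp ends s (nth x0 t i) [set y | y \in take i t] <= k].
  by apply: IH; move: cR; rewrite (cardsD1 x) xR add1n => -[].
exists (t ++ [:: x]); split.
- by rewrite cats1 rcons_uniq ut andbT mt in_setD1 eqxx.
- move=> y; rewrite mem_cat mt in_setD1 inE.
  by case: (eqVneq y x) => [->|] /=; rewrite ?orbF ?orbT.
- move=> i; rewrite size_cat /= addn1 ltnS leq_eqVlt => /orP[/eqP ->|lt].
    rewrite nth_cat ltnn subnn /= take_cat ltnn subnn take0 cats0.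
    have -> : [set y | y \in t] = R :\ x by apply/setP => y; rewrite inE mt.
    exact: sx.
  by rewrite nth_cat lt take_cat lt; exact: st.
Qed.

Lemma nohide_deg s k :
  ~ (exists R : {set V}, R != set0 /\ edge_hideout ends k.+1 s R) ->
  edge_degeneracy ends s <= k.
Proof.
move=> nh.
have H : forall R : {set V}, R != set0 -> exists2 x, x \in R & supp ends s x (R :\ x) <= k.
  move=> R R0; case: (boolP [exists x in R, supp ends s x (R :\ x) <= k]).
    by case/exists_inP => x xR h; exists x.
  move/exists_inPn => h; exfalso; apply: nh; exists R; split => // x xR.
  by have := h x xR; rewrite -ltnNge.
suff [L [Li Ld]] : exists L : layout V, injectiveb L /\ layout_degeneracy ends s L <= k.
  apply: leq_trans Ld; rewrite /edge_degeneracy.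
  exact: (bigmin_le (P := fun L : layout V => injectiveb L)).
case: (pickP (@predT V)) => [x0 _ | H0]; last first.
  exists [ffun i => @enum_val V (pred_of_simpl predT) i]; split.
    by apply/injectiveP => i j; rewrite !ffunE; exact: enum_val_inj.
  by apply/bigmax_leqP => i _; have := H0 (@enum_val V (pred_of_simpl predT) i).
have [t [ut mt st]] := seq_build x0 H (erefl #|[set: V]|).
have st' : size t = #|V|.
  by rewrite -(card_uniqP ut); apply: eq_card => y; rewrite mt inE.
pose L : layout V := [ffun i : 'I_#|V| => nth x0 t i].
have Lt : forall j, L j = nth x0 t j by move=> j; rewrite ffunE.
exists L; split.
  apply/injectiveP => i j; rewrite !Lt => /eqP; rewrite nth_uniq ?st' //.
  by move/eqP; exact: val_inj.
apply/bigmax_leqP => i _; rewrite Lt.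
have -> : [set L j | j in 'I_#|V| & (j < i)%N] = [set y | y \in take i t].
  apply/setP => y; rewrite inE; apply/imsetP/idP.
    move=> [j]; rewrite inE => /andP[_ lt] ->; rewrite Lt.
    by rewrite -(nth_take x0 lt) mem_nth // size_take st' ltn_ord.
  move=> yt; have [j jlt <-] := nthP x0 yt.
  move: jlt; rewrite size_take st' ltn_ord => jlt.
  exists (Ordinal (ltn_trans jlt (ltn_ord i))); first by rewrite inE jlt.
  by rewrite Lt /= nth_take.
by apply: st; rewrite st'.
Qed.

End Main.

Theorem mainTheorem1 (V E : finType) (ends : E -> V * V)
  (loopless : forall e : E, (ends e).1 != (ends e).2)
  (s : extn) (s_pos : forall n, s = Some n -> 0 < n) (k : nat) :
  [/\ (exists f : cop_strategy V E,
         cost f <= k /\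
         forall (vstart : V) (g : {set E} -> V -> V),
           robber_valid ends s g -> cop_winning f vstart g)
      <-> ~ (exists R : {set V}, R != set0 /\ edge_hideout ends k.+1 s R),
      ~ (exists R : {set V}, R != set0 /\ edge_hideout ends k.+1 s R)
      <-> edge_degeneracy ends s <= k
    & edge_degeneracy ends s <= k
      <-> (exists f : cop_strategy V E,
         cost f <= k /\
         forall (vstart : V) (g : {set E} -> V -> V),
           robber_valid ends s g -> cop_winning f vstart g)].
Proof.
have h12 := @cops_nohide V E ends s k.
have h23 := @nohide_deg V E ends s k.
have h31 := @deg_cops V E ends s k.
split; split; auto.
Qed.
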